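(* Let $U\sim\mathrm{unif}(0,1)$. For all $n\ge1$, $$b_n:=\big\|C_n(\lceil nU\rceil)-C(U)\big\|_2\le \Big(3+\frac{2\pi}{\sqrt3}\Big)\frac1n<\frac{6.63}{n}.$$
   Context: Let $H_n=\sum_{k=1}^n 1/k$ and $\mu_n := 2(n+1)H_n-4n$ for $n\ge0$; this is the expected number of comparisons of randomized Quicksort on $n$ distinct numbers. For $n\ge1$ and $1\le i\le n$, define $$C_n(i):=\frac{n-1}{n}+\frac1n\big(\mu_{i-1}+\mu_{n-i}-\mu_n\big).$$ Define $C(u):=2u\ln u+2(1-u)\ln(1-u)+1$ for $u\in[0,1]$, with $C(0)=C(1)=1$. $\|\cdot\|_2$ denotes the $L^2$ norm. *)

(* Defs.v *)
From Stdlib Require Import Reals ZArith.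
From Coquelicot Require Import Coquelicot.
Open Scope R_scope.

Fixpoint harm (n : nat) : R :=
  match n with
  | O => 0
  | S m => harm m + / INR (S m)
  end.

Definition mu (n : nat) : R := 2 * (INR n + 1) * harm n - 4 * INR n.

(* C_n(i) = (n-1)/n + (mu_{i-1} + mu_{n-i} - mu_n)/n, for 1 <= i <= n
   (nat subtraction is truncated; only 1 <= i <= n is relevant) *)
Definition Cn (n i : nat) : R :=
  (INR n - 1) / INR n + (mu (i - 1) + mu (n - i) - mu n) / INR n.

Definition Clim (u : R) : R :=
  if Req_EM_T u 0 then 1
  else if Req_EM_T u 1 then 1
  else 2 * u * ln u + 2 * (1 - u) * ln (1 - u) + 1.

Definition ceilZ (x : R) : Z := (- Int_part (- x))%Z.

Definition ceil_nat (x : R) : nat := Z.to_nat (ceilZ x).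

Definition err2 (n : nat) (u : R) : R :=
  (Cn n (ceil_nat (INR n * u)) - Clim u) ^ 2.

(* Main.v *)
Require Import Defs.
From Stdlib Require Import Reals Lra Lia Psatz ZArith.
From Coquelicot Require Import Coquelicot.
Open Scope R_scope.


Lemma ln_le_xm1 x : 0 < x -> ln x <= x - 1.
Proof. intros. pose proof (exp_ineq1_le (ln x)). rewrite exp_ln in H0; lra. Qed.

Lemma ln_diff_ub x y : 0 < x -> 0 < y -> ln y - ln x <= (y - x) / x.
Proof.
  intros hx hy. rewrite <- ln_div by lra. pose proof (ln_le_xm1 (y/x)).
  assert (0 < y/x) by (apply Rdiv_lt_0_compat; lra).
  specialize (H H0). replace ((y-x)/x) with (y/x - 1) by (field; lra). lra.
Qed.

Lemma ln_diff_lb x y : 0 < x -> 0 < y -> (y - x) / y <= ln y - ln x.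
Proof.
  intros hx hy. pose proof (ln_diff_ub y x hy hx).
  replace ((y-x)/y) with (-((x-y)/y)) by (field; lra). lra.
Qed.

Definition dd (k : nat) : R := harm k - ln (INR k).

Lemma dd_step k : (1 <= k)%nat -> 0 <= dd k - dd (S k).
Proof.
  intros hk. unfold dd. cbn [harm].
  assert (h1 : 1 <= INR k) by (apply (le_INR 1); lia).
  rewrite S_INR.
  pose proof (ln_diff_lb (INR k) (INR k + 1) ltac:(lra) ltac:(lra)).
  replace ((INR k + 1 - INR k) / (INR k + 1)) with (/ (INR k + 1)) in H by (field; lra).
  lra.
Qed.

Definition ee (k : nat) : R := harm k - ln (INR k + 1).

Lemma ee_step k : ee k <= ee (S k).
Proof.
  unfold ee. cbn [harm]. rewrite S_INR.
  assert (h1 : 0 <= INR k) by apply pos_INR.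
  pose proof (ln_diff_ub (INR k + 1) (INR k + 1 + 1) ltac:(lra) ltac:(lra)).
  replace ((INR k + 1 + 1 - (INR k + 1)) / (INR k + 1)) with (/ (INR k + 1)) in H by (field; lra).
  lra.
Qed.

Lemma dd_mono k j : (1 <= k)%nat -> dd (k + j) <= dd k.
Proof.
  intros hk. induction j. rewrite Nat.add_0_r; lra.
  rewrite Nat.add_succ_r. pose proof (dd_step (k+j) ltac:(lia)). lra.
Qed.

Lemma ee_mono k j : ee k <= ee (k + j).
Proof.
  induction j. rewrite Nat.add_0_r; lra.
  rewrite Nat.add_succ_r. pose proof (ee_step (k+j)). lra.
Qed.

Lemma dd_diff k m : (1 <= k)%nat -> (k <= m)%nat ->
  0 <= INR k * (dd k - dd m) <= 1.
Proof.
  intros hk hkm. replace m with (k + (m - k))%nat by lia.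
  set (j := (m - k)%nat).
  assert (h1 : 1 <= INR k) by (apply (le_INR 1); lia).
  pose proof (dd_mono k j hk).
  pose proof (ee_mono k j).
  assert (dd k - dd (k+j) <= ln (INR k + 1) - ln (INR k)).
  { unfold dd, ee in *.
    assert (ln (INR (k+j)) <= ln (INR (k+j) + 1)).
    { assert (1 <= INR (k+j)) by (apply (le_INR 1); lia).
      left; apply ln_increasing; lra. }
    lra. }
  pose proof (ln_diff_ub (INR k) (INR k + 1) ltac:(lra) ltac:(lra)).
  replace ((INR k + 1 - INR k) / INR k) with (/ INR k) in H2 by (field; lra).
  split.
  - apply Rmult_le_pos; lra.
  - assert (INR k * (dd k - dd (k+j)) <= INR k * / INR k) by (apply Rmult_le_compat_l; lra).
    rewrite Rinv_r in H3 by lra. lra.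
Qed.


Fixpoint rfact (k:nat) : R := match k with 0%nat => 1 | S j => INR (S j) * rfact j end.
Lemma rfact_ok k : INR (fact k) = rfact k.
Proof. induction k; simpl rfact; [reflexivity|]. rewrite fact_simpl, mult_INR, IHk. reflexivity. Qed.

Lemma PI_ub : PI < 3.142.
Proof.
  destruct (Rle_lt_dec (3.142/2) (PI/2)) as [H|H]; [|lra].
  exfalso.
  assert (Hc : 0 <= cos (3.142/2)).
  { apply cos_ge_0; lra. }
  destruct (pre_cos_bound (3.142/2) 2) as [_ t]; [lra|lra|].
  revert t. unfold cos_approx; unfold cos_term; cbn [Nat.mul Nat.add sum_f_R0].
  rewrite !rfact_ok. cbn [rfact Nat.mul Nat.add pow INR]. intros t. lra.
Qed.

Lemma PI_lb : 3.1414 < PI.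
Proof.
  assert (3.1414/2 < PI/2); [|lra].
  apply PI2_lower_bound;[split; lra | ].
  destruct (pre_cos_bound (3.1414/2) 2) as [t _]; [lra | lra | ].
  apply Rlt_le_trans with (2 := t); clear t.
  unfold cos_approx; unfold cos_term; cbn [Nat.mul Nat.add sum_f_R0].
  rewrite !rfact_ok. cbn [rfact Nat.mul Nat.add pow INR]. lra.
Qed.


Lemma ln2_ub : ln 2 <= 0.71.
Proof.
  set (q := 1 + 0.71/16).
  assert (Hq : 2 <= q ^ 16) by (unfold q; simpl; lra).
  assert (ln 2 <= ln (q ^ 16)).
  { destruct (Rle_lt_or_eq_dec _ _ Hq) as [h|h]; [left; apply ln_increasing; lra|rewrite h; lra]. }
  rewrite ln_pow in H by (unfold q; lra).
  pose proof (ln_le_xm1 q). unfold q in *. simpl INR in H. lra.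
Qed.

Lemma sqrt3_b : 1.732 < sqrt 3 < 1.7321.
Proof.
  split.
  - rewrite <- (sqrt_pow2 1.732) by lra. apply sqrt_lt_1; lra.
  - rewrite <- (sqrt_pow2 1.7321) by lra. apply sqrt_lt_1; lra.
Qed.


Definition Kf (x : R) : R := x * ln x.

Lemma Kconv x y : 0 < x -> 0 < y -> (y - x) * (1 + ln x) <= Kf y - Kf x.
Proof.
  intros hx hy. unfold Kf. pose proof (ln_diff_lb x y hx hy).
  assert (y * ((y - x) / y) <= y * (ln y - ln x)) by (apply Rmult_le_compat_l; lra).
  replace (y * ((y - x) / y)) with (y - x) in H0 by (field; lra).
  nra.
Qed.

Lemma Kmono x y : 0 < x -> x <= y -> 1 <= y -> Kf x <= Kf y.
Proof.
  intros hx hxy hy. destruct (Rle_lt_dec 1 x).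
  - pose proof (Kconv x y hx ltac:(lra)).
    assert (0 <= ln x) by (rewrite <- ln_1; destruct r as [r|r]; [left; apply ln_increasing; lra | rewrite r; lra]).
    nra.
  - unfold Kf. assert (ln x < 0) by (rewrite <- ln_1; apply ln_increasing; lra).
    assert (0 <= ln y) by (rewrite <- ln_1; destruct hy as [r2|r2]; [left; apply ln_increasing; lra | rewrite <- r2; lra]).
    nra.
Qed.

Lemma mu_S k : mu k = 2 * (INR (S k) * harm (S k)) - 4 * INR (S k) + 2.
Proof.
  unfold mu. cbn [harm]. rewrite S_INR.
  assert (0 <= INR k) by apply pos_INR. field. lra.
Qed.

Lemma Cn_id p q : 
  INR (S (p + q)) * Cn (S (p+q)) (S p) =
  INR (S (p+q)) + 1 + 2 * (INR (S p) * harm (S p) + INR (S q) * harm (S q)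
     - INR (S (S (p+q))) * harm (S (S (p+q)))).
Proof.
  unfold Cn. replace (S p - 1)%nat with p by lia.
  replace (S (p+q) - S p)%nat with q by lia.
  rewrite (mu_S p), (mu_S q), (mu_S (S (p+q))).
  rewrite !S_INR, plus_INR.
  assert (0 <= INR p) by apply pos_INR. assert (0 <= INR q) by apply pos_INR.
  field. lra.
Qed.


Lemma core p q u : 0 < u < 1 ->
  INR (S p) - 1 <= INR (S (p+q)) * u <= INR (S p) ->
  let N := INR (S (p+q)) in
  let D := N * (Cn (S (p+q)) (S p) - Clim u) in
  D <= 5 /\ -1 - 2 * ln (N + 1) <= D /\
  (u <= 1/2 -> 1 - 2 * ln 2 + 2 * ln u <= D) /\
  (1/2 <= u -> 1 - 2 * ln 2 + 2 * ln (1 - u) <= D).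
Proof.
  intros hu ht N D. change (INR (S (p+q))) with N in ht.
  assert (hN1 : 1 <= N) by (unfold N; apply (le_INR 1); lia).
  set (A := INR (S p)). set (B := INR (S q)). change (INR (S p)) with A in ht.
  assert (hA : 1 <= A) by (unfold A; apply (le_INR 1); lia).
  assert (hB : 1 <= B) by (unfold B; apply (le_INR 1); lia).
  assert (hAB : A + B = N + 1) by (unfold A, B, N; rewrite !S_INR, plus_INR; ring).
  assert (hN2 : INR (S (S (p+q))) = N + 1) by (unfold N; rewrite (S_INR (S (p+q))); ring).
  pose proof (dd_diff (S p) (S (S (p+q))) ltac:(lia) ltac:(lia)) as E1.
  pose proof (dd_diff (S q) (S (S (p+q))) ltac:(lia) ltac:(lia)) as E2.
  fold A in E1. fold B in E2.
  set (dA := dd (S p)) in *. set (dB := dd (S q)) in *. set (dN := dd (S (S (p+q)))) in *.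
  assert (hCn : N * Cn (S (p+q)) (S p) = N + 1 + 2 * (Kf A + Kf B - Kf (N+1)
     + A * (dA - dN) + B * (dB - dN))).
  { unfold N. rewrite Cn_id. fold N A B. rewrite hN2.
    unfold dA, dB, dN, dd, Kf. fold A B. rewrite hN2.
    assert (N + 1 = A + B) by lra. nra. }
  set (t := N * u). set (s := N * (1 - u)).
  assert (ht0 : 0 < t) by (unfold t; nra).
  assert (hs0 : 0 < s) by (unfold s; nra).
  assert (hlt : ln t = ln N + ln u) by (unfold t; apply ln_mult; lra).
  assert (hls : ln s = ln N + ln (1-u)) by (unfold s; apply ln_mult; lra).
  assert (hCl : N * Clim u = N + 2 * (Kf t + Kf s - Kf N)).
  { unfold Clim. destruct (Req_EM_T u 0); [lra|]. destruct (Req_EM_T u 1); [lra|].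
    unfold Kf. rewrite hlt, hls. unfold t, s. ring. }
  assert (hD : D = 1 + 2 * (A * (dA - dN) + B * (dB - dN)) +
      2 * ((Kf A - Kf t) + (Kf B - Kf s) - (Kf (N+1) - Kf N))).
  { unfold D. rewrite Rmult_minus_distr_l, hCn, hCl. ring. }
  assert (hth : 0 <= A - t <= 1) by (unfold t; lra).
  assert (hBs : B - s = 1 - (A - t)) by (unfold s, t; lra).
  pose proof (Kconv A t ltac:(lra) ht0) as f1.
  pose proof (Kconv B s ltac:(lra) hs0) as f2.
  pose proof (Kconv N (N+1) ltac:(lra) ltac:(lra)) as f3.
  pose proof (Kconv t A ht0 ltac:(lra)) as f4.
  pose proof (Kconv s B hs0 ltac:(lra)) as f5.
  pose proof (Kconv (N+1) N ltac:(lra) ltac:(lra)) as f6.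
  pose proof (Kmono t A ht0 ltac:(lra) hA) as f7.
  pose proof (Kmono s B hs0 ltac:(lra) hB) as f8.
  rewrite hlt in f4. rewrite hls in f5.
  assert (lA : ln A <= ln N).
  { destruct (Rle_lt_or_eq_dec A N) as [h|h]. unfold A, N; apply le_INR; lia.
    left; apply ln_increasing; lra. rewrite h; lra. }
  assert (lB : ln B <= ln N).
  { destruct (Rle_lt_or_eq_dec B N) as [h|h]. unfold B, N; apply le_INR; lia.
    left; apply ln_increasing; lra. rewrite h; lra. }
  assert (lN : ln (N + 1) <= ln N + ln 2).
  { rewrite <- ln_mult by lra. destruct (Rle_lt_or_eq_dec (N+1) (N*2)) as [h|h]. lra.
    left; apply ln_increasing; lra. rewrite h; lra. }
  clearbody t s A B dA dB dN D N.
  set (th := A - t) in *. assert (eth : t = A - th) by (unfold th; ring). clearbody th.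
  subst t.
  assert (es : s = B - (1 - th)) by lra. subst s.
  assert (g1 : th * ln A <= th * ln N) by (apply Rmult_le_compat_l; lra).
  assert (g2 : (1 - th) * ln B <= (1 - th) * ln N) by (apply Rmult_le_compat_l; lra).
  split; [|split; [|split]].
  - rewrite hD. lra.
  - rewrite hD. lra.
  - intros hu2. assert (ln u <= ln (1 - u)) by
      (destruct (Rle_lt_or_eq_dec u (1-u)) as [h|h]; [lra| left; apply ln_increasing; lra | right; f_equal; lra]).
    assert (g3 : (1 - th) * ln u <= (1 - th) * ln (1 - u)) by (apply Rmult_le_compat_l; lra).
    rewrite hD. lra.
  - intros hu2. assert (ln (1 - u) <= ln u) by
      (destruct (Rle_lt_or_eq_dec (1-u) u) as [h|h]; [lra| left; apply ln_increasing; lra | right; f_equal; lra]).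
    assert (g3 : th * ln (1 - u) <= th * ln u) by (apply Rmult_le_compat_l; lra).
    rewrite hD. lra.
Qed.


Lemma ceil_spec x : 0 < x -> exists a : nat, ceil_nat x = a /\ INR a - 1 < x <= INR a /\ (1 <= a)%nat.
Proof.
  intros hx. unfold ceil_nat, ceilZ.
  destruct (base_Int_part (- x)) as [h1 h2].
  set (z := Int_part (-x)) in *.
  assert (hz : (z <= -1)%Z).
  { apply Z.lt_succ_r. apply lt_IZR. rewrite succ_IZR. lra. }
  exists (Z.to_nat (- z)). split; [reflexivity|].
  rewrite INR_IZR_INZ, Z2Nat.id by lia. rewrite opp_IZR.
  split; [lra|]. lia.
Qed.

Lemma ceil_grid n u : (1 <= n)%nat -> 0 < u < 1 ->
  exists p q, n = S (p + q) /\ ceil_nat (INR n * u) = S p /\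
   INR (S p) - 1 <= INR n * u <= INR (S p).
Proof.
  intros hn hu.
  assert (hN : 1 <= INR n) by (apply (le_INR 1); lia).
  destruct (ceil_spec (INR n * u)) as [a [ha [hb hc]]]; [nra|].
  assert (a <= n)%nat.
  { apply INR_le. assert (INR a < INR n + 1) by nra.
    rewrite <- S_INR in H. apply INR_lt in H. apply le_INR. lia. }
  exists (a - 1)%nat, (n - a)%nat. split; [lia|].
  replace (S (a - 1)) with a by lia. split; [assumption| lra].
Qed.

Lemma sq_bound D Y : -Y <= D -> D <= 5 -> 0 <= Y -> D ^ 2 <= 25 + Y ^ 2.
Proof. intros. destruct (Rle_lt_dec 0 D); nra. Qed.

Lemma err2_D n u : (1 <= n)%nat -> 0 < u < 1 ->
  exists D, INR n ^ 2 * err2 n u = D ^ 2 /\ D <= 5 /\ -1 - 2 * ln (INR n + 1) <= D /\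
  (u <= 1/2 -> 1 - 2 * ln 2 + 2 * ln u <= D) /\
  (1/2 <= u -> 1 - 2 * ln 2 + 2 * ln (1 - u) <= D).
Proof.
  intros hn hu. destruct (ceil_grid n u hn hu) as [p [q [e1 [e2 e3]]]].
  subst n. pose proof (core p q u hu e3) as hc. cbv zeta in hc.
  exists (INR (S (p+q)) * (Cn (S (p+q)) (S p) - Clim u)). split; [|exact hc].
  unfold err2. rewrite e2. ring.
Qed.

Lemma ln2_gt : 1/2 < ln 2.
Proof. pose proof ln_lt_2. lra. Qed.

Lemma PW1 n u : (1 <= n)%nat -> 0 < u < 1 ->
  INR n ^ 2 * err2 n u <= 25 + (2 * ln (INR n + 1) + 1) ^ 2.
Proof.
  intros hn hu. destruct (err2_D n u hn hu) as [D [e [h1 [h2 _]]]]. rewrite e.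
  apply sq_bound; try lra.
  assert (0 <= ln (INR n + 1)).
  { rewrite <- ln_1. left. apply ln_increasing. lra. assert (1 <= INR n) by (apply (le_INR 1); lia). lra. }
  lra.
Qed.

Lemma PW2 n u : (1 <= n)%nat -> 0 < u <= 1/2 ->
  INR n ^ 2 * err2 n u <= 25 + (2 * ln 2 - 1 - 2 * ln u) ^ 2.
Proof.
  intros hn hu. destruct (err2_D n u hn ltac:(lra)) as [D [e [h1 [_ [h3 _]]]]]. rewrite e.
  specialize (h3 ltac:(lra)). apply sq_bound; try lra.
  assert (ln u < 0) by (rewrite <- ln_1; apply ln_increasing; lra).
  pose proof ln2_gt. lra.
Qed.

Lemma PW3 n u : (1 <= n)%nat -> 1/2 <= u < 1 ->
  INR n ^ 2 * err2 n u <= 25 + (2 * ln 2 - 1 - 2 * ln (1 - u)) ^ 2.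
Proof.
  intros hn hu. destruct (err2_D n u hn ltac:(lra)) as [D [e [h1 [_ [_ h3]]]]]. rewrite e.
  specialize (h3 ltac:(lra)). apply sq_bound; try lra.
  assert (ln (1 - u) < 0) by (rewrite <- ln_1; apply ln_increasing; lra).
  pose proof ln2_gt. lra.
Qed.


Lemma Kf_small x : 0 < x < 1 -> Rabs (Kf x) <= 2 * sqrt x.
Proof.
  intros hx. unfold Kf.
  assert (hs : 0 < sqrt x) by (apply sqrt_lt_R0; lra).
  assert (hl : ln x < 0) by (rewrite <- ln_1; apply ln_increasing; lra).
  assert (e : ln x = 2 * ln (sqrt x)).
  { rewrite <- (sqrt_sqrt x) at 1 by lra. rewrite ln_mult by lra. ring. }
  pose proof (ln_le_xm1 (/ sqrt x) ltac:(apply Rinv_0_lt_compat; lra)) as h.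
  rewrite ln_Rinv in h by lra.
  assert (hx2 : x = sqrt x * sqrt x) by (rewrite sqrt_sqrt; lra).
  rewrite Rabs_left by nra.
  assert (x * / sqrt x = sqrt x) by (rewrite hx2 at 1; field; lra).
  nra.
Qed.

Lemma Kf_cont x : 0 <= x -> continuous Kf x.
Proof.
  intros hx. destruct hx as [hx|hx].
  - apply (ex_derive_continuous (K:=R_AbsRing) (V:=R_NormedModule)). unfold Kf. auto_derive. lra.
  - subst x. apply continuity_pt_filterlim. unfold continuity_pt, continue_in, limit1_in, limit_in. simpl.
    intros eps heps.
    exists (Rmin 1 (eps * eps / 4)). split.
    { apply Rmin_pos; nra. }
    intros x [_ hx]. unfold Rdist in *. rewrite Rminus_0_r in hx.
    unfold Kf. rewrite Rmult_0_l, Rminus_0_r.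
    destruct (Rle_lt_dec x 0) as [h|h].
    + unfold ln. destruct (Rlt_dec 0 x); [exfalso; lra|]. rewrite Rmult_0_r, Rabs_R0. lra.
    + assert (hx1 : x < 1) by (pose proof (Rmin_l 1 (eps*eps/4)); rewrite Rabs_right in hx; lra).
      assert (hx2 : x < eps * eps / 4) by (pose proof (Rmin_r 1 (eps*eps/4)); rewrite Rabs_right in hx; lra).
      pose proof (Kf_small x ltac:(lra)). unfold Kf in H.
      assert (sqrt x < eps / 2).
      { rewrite <- (sqrt_pow2 (eps/2)) by lra. apply sqrt_lt_1; nra. }
      lra.
Qed.

Definition gC (u : R) : R := 2 * Kf u + 2 * Kf (1 - u) + 1.

Lemma Clim_gC u : 0 <= u <= 1 -> Clim u = gC u.
Proof.
  intros hu. unfold Clim, gC, Kf.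
  destruct (Req_EM_T u 0) as [e|e].
  { subst. rewrite Rminus_0_r, ln_1. unfold ln. destruct (Rlt_dec 0 0); [exfalso; lra|]. ring. }
  destruct (Req_EM_T u 1) as [e1|e1].
  { subst. rewrite Rminus_diag, ln_1. unfold ln. destruct (Rlt_dec 0 0); [exfalso; lra|]. ring. }
  ring.
Qed.

Lemma piece_cont c u : 0 <= u <= 1 -> continuous (fun u => (c - gC u) * (c - gC u)) u.
Proof.
  intros hu.
  assert (h0 : continuous (fun u => Kf (1 - u)) u).
  { apply (continuous_comp (fun u => 1 - u) Kf).
    + apply (continuous_minus (fun _ => 1) (fun u => u)); [apply continuous_const|apply continuous_id].
    + apply Kf_cont; lra. }
  assert (h1 : continuous gC u).
  { unfold gC. apply (continuous_plus (fun u => 2 * Kf u + 2 * Kf (1 - u)) (fun _ => 1)); [|apply continuous_const].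
    apply (continuous_plus (fun u => 2 * Kf u) (fun u => 2 * Kf (1 - u))).
    - apply (continuous_mult (fun _ => 2) Kf); [apply continuous_const|]. apply Kf_cont; lra.
    - apply (continuous_mult (fun _ => 2) (fun u => Kf (1 - u))); [apply continuous_const|exact h0]. }
  assert (h2 : continuous (fun u => c - gC u) u).
  { apply (continuous_minus (fun _ => c) gC); [apply continuous_const|exact h1]. }
  apply (continuous_mult (fun u => c - gC u) (fun u => c - gC u)); exact h2.
Qed.


Lemma ex_piece n a : (1 <= n)%nat -> (a < n)%nat ->
  ex_RInt (err2 n) (INR a / INR n) (INR (S a) / INR n).
Proof.
  intros hn ha.
  assert (hN : 1 <= INR n) by (apply (le_INR 1); lia).
  assert (hS : INR (S a) <= INR n) by (apply le_INR; lia).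
  assert (h0 : 0 <= INR a) by apply pos_INR.
  assert (hSa : INR (S a) = INR a + 1) by apply S_INR.
  assert (l1 : 0 <= INR a / INR n) by (apply Rdiv_le_0_compat; lra).
  assert (l2 : INR (S a) / INR n <= 1).
  { assert (INR (S a) / INR n <= INR n / INR n) by (apply Rmult_le_compat_r; [left; apply Rinv_0_lt_compat; lra|lra]).
    replace (INR n / INR n) with 1 in H by (field; lra). exact H. }
  assert (l3 : INR a / INR n <= INR (S a) / INR n) by (apply Rmult_le_compat_r; [left; apply Rinv_0_lt_compat; lra| lra]).
  apply (ex_RInt_ext (fun u => (Cn n (S a) - gC u) * (Cn n (S a) - gC u))).
  - intros x hx. rewrite Rmin_left in hx by lra. rewrite Rmax_right in hx by lra.
    unfold err2.
    assert (hx1 : INR a < INR n * x < INR a + 1).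
    { destruct hx as [hx1 hx2].
      apply (Rmult_lt_compat_l (INR n)) in hx1; [|lra].
      apply (Rmult_lt_compat_l (INR n)) in hx2; [|lra].
      replace (INR n * (INR a / INR n)) with (INR a) in hx1 by (field; lra).
      replace (INR n * (INR (S a) / INR n)) with (INR a + 1) in hx2 by (rewrite hSa; field; lra).
      lra. }
    destruct (ceil_spec (INR n * x)) as [b [hb [hb1 hb2]]]; [lra|].
    assert (hbeq : b = S a).
    { assert (INR a < INR b) by lra. assert (INR b < INR (S (S a))) by (rewrite !S_INR; lra).
      apply INR_lt in H. apply INR_lt in H0. lia. }
    rewrite hb, hbeq. rewrite Clim_gC by lra. simpl. ring.
  - apply (ex_RInt_continuous (V:=R_CompleteNormedModule)). intros z hz.
    rewrite Rmin_left in hz by lra. rewrite Rmax_right in hz by lra.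
    apply piece_cont. lra.
Qed.

Lemma ex_upto n k : (1 <= n)%nat -> (k <= n)%nat -> ex_RInt (err2 n) 0 (INR k / INR n).
Proof.
  intros hn. induction k; intros hk.
  - simpl. unfold Rdiv. rewrite Rmult_0_l. apply ex_RInt_point.
  - apply (ex_RInt_Chasles _ 0 (INR k / INR n)).
    + apply IHk. lia.
    + apply ex_piece; lia.
Qed.

Lemma ex_all n : (1 <= n)%nat -> ex_RInt (err2 n) 0 1.
Proof.
  intros hn. assert (hN : 1 <= INR n) by (apply (le_INR 1); lia).
  replace 1 with (INR n / INR n) by (field; lra).
  apply ex_upto; lia.
Qed.


Definition Pp (L : R) : R := L * L + 4 * L + 8.
Definition Gh (c u : R) : R := u * (25 + Pp (c - 2 * ln u)).
Definition mj (c u : R) : R := 25 + (c - 2 * ln u) ^ 2.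

Lemma Gh_deriv c u : 0 < u -> is_derive (Gh c) u (mj c u).
Proof.
  intros hu. unfold Gh, Pp, mj. auto_derive. lra. field. lra.
Qed.

Lemma mj_cont c u : 0 < u -> continuous (mj c) u.
Proof.
  intros hu. apply (ex_derive_continuous (K:=R_AbsRing) (V:=R_NormedModule)).
  unfold mj. auto_derive. lra.
Qed.

Lemma RInt_mj c a b : 0 < a -> a <= b ->
  is_RInt (mj c) a b (Gh c b - Gh c a).
Proof.
  intros ha hab.
  apply (is_RInt_derive (V:=R_CompleteNormedModule) (Gh c) (mj c)).
  - intros x hx. rewrite Rmin_left in hx by lra. apply Gh_deriv. lra.
  - intros x hx. rewrite Rmin_left in hx by lra. apply mj_cont. lra.
Qed.

Definition mj2 (c u : R) : R := mj c (1 - u).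

Lemma RInt_mj2 c a b : a <= b -> b < 1 ->
  is_RInt (mj2 c) a b (Gh c (1 - a) - Gh c (1 - b)).
Proof.
  intros hab hb.
  assert (H : is_RInt (mj2 c) a b (minus (- Gh c (1 - b)) (- Gh c (1 - a)))).
  { apply (is_RInt_derive (V:=R_CompleteNormedModule) (fun u => - Gh c (1 - u)) (mj2 c)).
  - intros x hx. rewrite Rmax_right in hx by lra.
    unfold mj2.
    replace (mj c (1 - x)) with (- ((-1) * mj c (1 - x))) by ring.
    apply (is_derive_opp (fun u => Gh c (1 - u))).
    apply (is_derive_comp (Gh c) (fun u => 1 - u)).
    + apply Gh_deriv. lra.
    + auto_derive; [auto|ring].
  - intros x hx. rewrite Rmax_right in hx by lra.
    unfold mj2. apply (continuous_comp (fun u => 1 - u) (mj c)).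
    + apply (continuous_minus (fun _ => 1) (fun u => u)); [apply continuous_const|apply continuous_id].
    + apply mj_cont. lra. }
  unfold minus, plus, opp in H; simpl in H.
  replace (Gh c (1 - a) - Gh c (1 - b)) with (- Gh c (1 - b) + - - Gh c (1 - a)) by ring. exact H.
Qed.


Lemma is_RInt_div (f : R -> R) a b (l k : R) : is_RInt f a b l -> is_RInt (fun x => f x / k) a b (l / k).
Proof.
  intros h. apply (is_RInt_scal (V:=R_CompleteNormedModule) f a b (/ k)) in h.
  replace (l / k) with (scal (/ k) l) by (unfold scal; simpl; unfold mult; simpl; unfold Rdiv; ring).
  eapply is_RInt_ext; [|exact h].
  intros x _. unfold scal; simpl; unfold mult; simpl. unfold Rdiv. ring.
Qed.

Lemma RInt_const_le f a b c : a <= b -> ex_RInt f a b ->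
  (forall x, a < x < b -> f x <= c) -> RInt f a b <= (b - a) * c.
Proof.
  intros hab hf h.
  assert (RInt f a b <= RInt (fun _ => c) a b).
  { apply RInt_le; auto. apply ex_RInt_const. }
  rewrite RInt_const in H. unfold scal in H; simpl in H; unfold mult in H; simpl in H. lra.
Qed.

Lemma RInt_is_le f g a b l : a <= b -> ex_RInt f a b -> is_RInt g a b l ->
  (forall x, a < x < b -> f x <= g x) -> RInt f a b <= l.
Proof.
  intros hab hf hg h. rewrite <- (is_RInt_unique g a b l hg).
  apply RInt_le; auto. exists l; exact hg.
Qed.

Definition c0 : R := 2 * ln 2 - 1.

Lemma bound_ge2 n : (2 <= n)%nat ->
  RInt (err2 n) 0 1 <= (25 + Pp (c0 - 2 * ln (1/2))) / INR n ^ 2.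
Proof.
  intros hn. set (N := INR n).
  assert (hN : 2 <= N) by (unfold N; apply (le_INR 2); lia).
  assert (hN2 : 0 < N ^ 2) by nra.
  assert (hex := ex_all n ltac:(lia)).
  set (B := 2 * ln (N + 1) + 1).
  assert (e1 : 0 < 1 / N <= 1/2).
  { split. unfold Rdiv; rewrite Rmult_1_l; apply Rinv_0_lt_compat; lra.
    apply (Rmult_le_reg_r N); [lra|]. field_simplify; lra. }
  set (a1 := 1 / N) in *.
  assert (ex1 : ex_RInt (err2 n) 0 a1) by (apply (ex_RInt_Chasles_1 (V:=R_CompleteNormedModule) _ 0 a1 1); [lra|exact hex]).
  assert (ex2' : ex_RInt (err2 n) a1 1) by (apply (ex_RInt_Chasles_2 (V:=R_CompleteNormedModule) _ 0 a1 1); [lra|exact hex]).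
  assert (ex2 : ex_RInt (err2 n) a1 (1/2)) by (apply (ex_RInt_Chasles_1 (V:=R_CompleteNormedModule) _ a1 (1/2) 1); [lra|exact ex2']).
  assert (ex3' : ex_RInt (err2 n) (1/2) 1) by (apply (ex_RInt_Chasles_2 (V:=R_CompleteNormedModule) _ a1 (1/2) 1); [lra|exact ex2']).
  assert (ex3 : ex_RInt (err2 n) (1/2) (1 - a1)) by (apply (ex_RInt_Chasles_1 (V:=R_CompleteNormedModule) _ (1/2) (1 - a1) 1); [lra|exact ex3']).
  assert (ex4 : ex_RInt (err2 n) (1 - a1) 1) by (apply (ex_RInt_Chasles_2 (V:=R_CompleteNormedModule) _ (1/2) (1-a1) 1); [lra|exact ex3']).
  assert (eI : RInt (err2 n) 0 1 = RInt (err2 n) 0 a1 + RInt (err2 n) a1 (1/2)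
             + RInt (err2 n) (1/2) (1 - a1) + RInt (err2 n) (1 - a1) 1).
  { rewrite <- (RInt_Chasles (V:=R_CompleteNormedModule) (err2 n) 0 a1 1) by auto.
    rewrite <- (RInt_Chasles (V:=R_CompleteNormedModule) (err2 n) a1 (1/2) 1) by auto.
    rewrite <- (RInt_Chasles (V:=R_CompleteNormedModule) (err2 n) (1/2) (1-a1) 1) by auto.
    unfold plus; simpl. ring. }
  assert (pw1 : forall x, 0 < x < 1 -> err2 n x <= (25 + B ^ 2) / N ^ 2).
  { intros x hx. pose proof (PW1 n x ltac:(lia) hx). fold N B in H.
    apply (Rmult_le_reg_l (N ^ 2)); [lra|]. field_simplify; lra. }
  assert (i1 : RInt (err2 n) 0 a1 <= (a1 - 0) * ((25 + B ^ 2) / N ^ 2)).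
  { apply RInt_const_le; auto; try lra. intros x hx. apply pw1. lra. }
  assert (i4 : RInt (err2 n) (1 - a1) 1 <= (1 - (1 - a1)) * ((25 + B ^ 2) / N ^ 2)).
  { apply RInt_const_le; auto; try lra. intros x hx. apply pw1. lra. }
  assert (i2 : RInt (err2 n) a1 (1/2) <= (Gh c0 (1/2) - Gh c0 a1) / N ^ 2).
  { apply (RInt_is_le _ (fun x => mj c0 x / N ^ 2)); auto; try lra.
    - apply is_RInt_div. apply RInt_mj; lra.
    - intros x hx. pose proof (PW2 n x ltac:(lia) ltac:(lra)). fold N in H.
      apply (Rmult_le_reg_l (N ^ 2)); [lra|]. unfold mj, c0. field_simplify; lra. }
  assert (i3 : RInt (err2 n) (1/2) (1 - a1) <= (Gh c0 (1 - 1/2) - Gh c0 (1 - (1 - a1))) / N ^ 2).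
  { apply (RInt_is_le _ (fun x => mj2 c0 x / N ^ 2)); auto; try lra.
    - apply is_RInt_div. apply RInt_mj2; lra.
    - intros x hx. pose proof (PW3 n x ltac:(lia) ltac:(lra)). fold N in H.
      apply (Rmult_le_reg_l (N ^ 2)); [lra|]. unfold mj2, mj, c0. field_simplify; lra. }
  replace (1 - (1 - a1)) with a1 in i3 by ring.
  replace (1 - 1/2) with (1/2) in i3 by field.
  assert (key : a1 * (25 + B ^ 2) <= Gh c0 a1).
  { unfold Gh. apply Rmult_le_compat_l; [lra|].
    assert (ea : ln a1 = - ln N) by (unfold a1, Rdiv; rewrite Rmult_1_l; apply ln_Rinv; lra).
    rewrite ea. set (x := c0 - 2 * - ln N).
    assert (hB : 0 <= B).
    { unfold B. assert (0 <= ln (N+1)) by (rewrite <- ln_1; left; apply ln_increasing; lra). lra. }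
    assert (hBx : B <= x + 2).
    { unfold B, x, c0.
      assert (ln (N + 1) <= ln N + ln 2).
      { rewrite <- ln_mult by lra. destruct (Rle_lt_or_eq_dec (N+1) (N*2)) as [h|h]. lra.
        left; apply ln_increasing; lra. right; f_equal; lra. }
      lra. }
    unfold Pp. nra. }
  rewrite eI.
  assert (e0 : (25 + Pp (c0 - 2 * ln (1 / 2))) / N ^ 2 = 2 * Gh c0 (1/2) / N ^ 2).
  { unfold Gh. field. lra. }
  rewrite e0.
  assert (i1' : RInt (err2 n) 0 a1 <= a1 * (25 + B ^ 2) / N ^ 2) by (unfold Rdiv in *; lra).
  assert (i4' : RInt (err2 n) (1 - a1) 1 <= a1 * (25 + B ^ 2) / N ^ 2).
  { replace (1 - (1 - a1)) with a1 in i4 by ring. unfold Rdiv in *; lra. }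
  assert (a1 * (25 + B ^ 2) / N ^ 2 <= Gh c0 a1 / N ^ 2).
  { unfold Rdiv. apply Rmult_le_compat_r; [left; apply Rinv_0_lt_compat; lra | exact key]. }
  unfold Rdiv in *. lra.
Qed.

Lemma bound_1 : RInt (err2 1) 0 1 <= 25 + (2 * ln 2 + 1) ^ 2.
Proof.
  replace (25 + (2 * ln 2 + 1) ^ 2) with ((1 - 0) * (25 + (2 * ln 2 + 1) ^ 2)) by ring.
  apply RInt_const_le; try lra. apply ex_all; lia.
  intros x hx. pose proof (PW1 1 x ltac:(lia) hx). simpl INR in H.
  replace (1 + 1) with 2 in H by ring. lra.
Qed.


Theorem lemma2p2 (n : nat) (hn : (1 <= n)%nat) :
  ex_RInt (err2 n) 0 1 /\
  sqrt (RInt (err2 n) 0 1) <= (3 + 2 * PI / sqrt 3) * / INR n /\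
  (3 + 2 * PI / sqrt 3) * / INR n < (663 / 100) / INR n.
Proof.
  pose proof PI_ub. pose proof PI_lb. pose proof sqrt3_b as [s1 s2].
  pose proof ln2_ub. pose proof ln2_gt.
  assert (hN : 1 <= INR n) by (apply (le_INR 1); lia).
  set (K := 3 + 2 * PI / sqrt 3).
  assert (hK1 : 6.627 <= K).
  { unfold K. assert (3.627 * sqrt 3 <= 2 * PI) by lra.
    assert (3.627 <= 2 * PI / sqrt 3).
    { apply (Rmult_le_reg_r (sqrt 3)); [lra|]. field_simplify; lra. }
    lra. }
  assert (hK2 : K < 6.63).
  { unfold K. assert (2 * PI / sqrt 3 < 3.63).
    { apply (Rmult_lt_reg_r (sqrt 3)); [lra|]. field_simplify; lra. }
    lra. }
  assert (hI : RInt (err2 n) 0 1 <= (K * / INR n) ^ 2).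
  { destruct (Nat.eq_dec n 1) as [e|e].
    - subst n. simpl INR. rewrite Rinv_1, Rmult_1_r. pose proof bound_1. nra.
    - pose proof (bound_ge2 n ltac:(lia)).
      assert (Pp (c0 - 2 * ln (1/2)) <= 18.75).
      { unfold Pp, c0. replace (ln (1/2)) with (- ln 2).
        2:{ unfold Rdiv. rewrite Rmult_1_l, ln_Rinv by lra. reflexivity. }
        nra. }
      assert ((25 + Pp (c0 - 2 * ln (1 / 2))) / INR n ^ 2 <= (K * / INR n) ^ 2).
      { replace ((K * / INR n) ^ 2) with (K ^ 2 / INR n ^ 2) by (field; lra).
        unfold Rdiv. apply Rmult_le_compat_r. left; apply Rinv_0_lt_compat; nra. nra. }
      lra. }
  split; [apply ex_all; exact hn|]. split.
  - rewrite <- (sqrt_pow2 (K * / INR n)).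
    + apply sqrt_le_1_alt. exact hI.
    + apply Rmult_le_pos; [lra|]. left; apply Rinv_0_lt_compat; lra.
  - unfold Rdiv. apply Rmult_lt_compat_r; [apply Rinv_0_lt_compat; lra| lra].
Qed.
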